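(* Let $X$ be a metric space, $\mathcal M=\{M_1,\dots,M_n\}\subset\mathcal P^f_{\mathrm{Cl}}(X)$, $\Sigma(\mathcal M)\ne\emptyset$ and $d\in\Omega(\mathcal M)$. Let $K_1,K_2\in\Sigma_d(\mathcal M)$ with $K_1\subset K_2$. Then every $K\in\mathcal P^f_{\mathrm{Cl}}(X)$ with $K_1\subset K\subset K_2$ belongs to $\Sigma_d(\mathcal M)$.
   Context: For a metric space $X$, $p\in X$, $A\subset X$: $|p\,A|=\inf_{a\in A}|p\,a|$ ($=\infty$ if $A=\emptyset$); for $0\le r<\infty$, $B_r(A)=\{p:|p\,A|\le r\}$. For nonempty $A,B$, $d_H(A,B)=\max\{\sup_{a\in A}|a\,B|,\sup_{b\in B}|b\,A|\}\in[0,\infty]$. $\mathcal P_{\mathrm{Cl}}(X)$ is the set of nonempty closed subsets of $X$ with $d_H$. A finiteness class of $\mathcal P_{\mathrm{Cl}}(X)$ is an equivalence class of the relation $A\sim B\iff d_H(A,B)<\infty$; $\mathcal P^f_{\mathrm{Cl}}(X)$ denotes a fixed finiteness class. For finite $\mathcal M=\{M_1,\dots,M_n\}\subset\mathcal P^f_{\mathrm{Cl}}(X)$, set $S_{\mathcal M}(Y)=\sum_{i=1}^n d_H(Y,M_i)$ for $Y\in\mathcal P^f_{\mathrm{Cl}}(X)$; $\Sigma(\mathcal M)$ is the set of all minimizers of $S_{\mathcal M}$ over $\mathcal P^f_{\mathrm{Cl}}(X)$. For $K\in\Sigma(\mathcal M)$, $d(K)=(d_H(K,M_1),\dots,d_H(K,M_n))$;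 $\Omega(\mathcal M)=\{d(K):K\in\Sigma(\mathcal M)\}$; for $d=(d_1,\dots,d_n)\in\Omega(\mathcal M)$, $\Sigma_d(\mathcal M)=\{K\in\Sigma(\mathcal M):d(K)=d\}$, partially ordered by inclusion; and $K_d=\bigcap_{i=1}^n B_{d_i}(M_i)$. *)

(* Defs.v *)
From HB Require Import structures.
From mathcomp Require Import all_boot all_order all_algebra.
From mathcomp Require Import all_classical all_reals ereal.
Set Implicit Arguments. Unset Strict Implicit. Unset Printing Implicit Defensive.
Import Order.TTheory GRing.Theory Num.Theory.
Local Open Scope classical_set_scope.
Local Open Scope ring_scope.

Record metricSpace (R : realType) := MetricSpace {
  mcarrier :> Type;
  mdist : mcarrier -> mcarrier -> R;
  mdist_ge0 : forall x y, 0 <= mdist x y;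
  mdist_eq0 : forall x y, mdist x y = 0 <-> x = y;
  mdist_sym : forall x y, mdist x y = mdist y x;
  mdist_tri : forall x y z, mdist x z <= mdist x y + mdist y z }.

Section Hausdorff.
Variables (R : realType) (X : metricSpace R).
Local Open Scope ereal_scope.

(* |p A| = inf_{a in A} |p a|, = +oo if A is empty *)
Definition pdist (p : X) (A : set X) : \bar R :=
  ereal_inf [set (mdist p a)%:E | a in A].

Definition ball_set (r : R) (A : set X) : set X :=
  [set p | pdist p A <= r%:E].

Definition dH (A B : set X) : \bar R :=
  maxe (ereal_sup [set pdist a B | a in A])
       (ereal_sup [set pdist b A | b in B]).

Definition mclosed (A : set X) : Prop :=
  forall x : X, (forall e : R, (0 < e)%R -> exists2 a, A a & (mdist x a < e)%R) -> A x.

Definition PCl (A : set X) : Prop := A !=set0 /\ mclosed A.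

Definition fclass (F0 : set X) (A : set X) : Prop := PCl A /\ dH A F0 < +oo.

Definition S_M (n : nat) (M : 'I_n -> set X) (Y : set X) : \bar R :=
  \sum_(i < n) dH Y (M i).

Definition Sigma (F0 : set X) (n : nat) (M : 'I_n -> set X) (K : set X) : Prop :=
  fclass F0 K /\ forall Y, fclass F0 Y -> S_M M K <= S_M M Y.

Definition dvec (n : nat) (M : 'I_n -> set X) (K : set X) : 'I_n -> \bar R :=
  fun i => dH K (M i).

Definition Omega (F0 : set X) (n : nat) (M : 'I_n -> set X) (d : 'I_n -> \bar R) : Prop :=
  exists2 K, Sigma F0 M K & dvec M K = d.

Definition Sigma_d (F0 : set X) (n : nat) (M : 'I_n -> set X) (d : 'I_n -> \bar R)
  (K : set X) : Prop := Sigma F0 M K /\ dvec M K = d.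

End Hausdorff.

(* Main.v *)
Require Import Defs.
From HB Require Import structures.
From mathcomp Require Import all_boot all_order all_algebra.
From mathcomp Require Import all_classical all_reals ereal.
Import Order.TTheory GRing.Theory Num.Theory.
Local Open Scope classical_set_scope.

Section H.
Variables (R : realType) (X : metricSpace R).
Local Open Scope ereal_scope.

Lemma pdist_ge0 (p : X) A : 0 <= pdist p A.
Proof. apply: le_ereal_inf_tmp => _ [a _ <-]; rewrite lee_fin; exact: Defs.mdist_ge0. Qed.

Lemma pdist_anti (p : X) {A B} : A `<=` B -> pdist p B <= pdist p A.
Proof. move=> AB; apply: le_ereal_inf => _ [a Aa <-]; exists a => //; exact: AB. Qed.

Lemma dH_ge0 (A B : set X) : A !=set0 -> 0 <= dH A B.
Proof.
case=> a Aa; rewrite /dH le_max; apply/orP; left.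
apply: (le_trans (pdist_ge0 a B)); apply: ereal_sup_ubound; by exists a.
Qed.

Lemma dH_mid {K1 K K2} (B : set X) : K1 `<=` K -> K `<=` K2 ->
  dH K B <= maxe (dH K2 B) (dH K1 B).
Proof.
move=> h1 h2.
have A1 : ereal_sup [set pdist a B | a in K] <= ereal_sup [set pdist a B | a in K2].
  by apply: le_ereal_sup => _ [a Ka <-]; exists a => //; apply: h2.
have A2 : ereal_sup [set pdist b K | b in B] <= ereal_sup [set pdist b K1 | b in B].
  apply: ge_ereal_sup => _ [b Bb <-].
  apply: (le_trans (pdist_anti b h1)); apply: ereal_sup_ubound; by exists b.
rewrite /dH !ge_max !le_max A1 A2 /= !orbT //=.
Qed.

Lemma dH_self (A : set X) : dH A A <= 0.
Proof.
rewrite /dH ge_max andbb; apply: ge_ereal_sup => _ [a Aa <-].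
apply: le_trans (ereal_inf_lbound _) _; first by exists a.
by rewrite lee_fin (proj2 (Defs.mdist_eq0 a a)).
Qed.

End H.
Arguments dH_mid {R X K1 K K2}.
Arguments dH_ge0 {R X}.
Arguments dH_self {R X}.

Theorem mainTheorem10 (R : realType) (X : metricSpace R) (F0 : set X)
  (HF0 : PCl F0) (n : nat) (M : 'I_n -> set X)
  (HM : forall i, fclass F0 (M i))
  (HSigma : exists K, Sigma F0 M K)
  (d : 'I_n -> \bar R) (Hd : Omega F0 M d)
  (K1 K2 : set X) (HK1 : Sigma_d F0 M d K1) (HK2 : Sigma_d F0 M d K2)
  (H12 : K1 `<=` K2) :
  forall K : set X, fclass F0 K -> K1 `<=` K -> K `<=` K2 -> Sigma_d F0 M d K.
Proof.
Local Open Scope ereal_scope.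
move=> K HK h1 h2.
case: HK1 => [[HK1f HK1m] Hd1']; case: HK2 => [[HK2f HK2m] Hd2'].
have Hd1 : forall i, dH K1 (M i) = d i by move=> i; rewrite -Hd1'.
have Hd2 : forall i, dH K2 (M i) = d i by move=> i; rewrite -Hd2'.
have le_i : forall i, dH K (M i) <= d i.
  move=> i; apply: le_trans (dH_mid (M i) h1 h2) _.
  by rewrite Hd1 Hd2 maxxx.
have ge0d : forall i, 0 <= d i.
  move=> i; rewrite -Hd1; apply: dH_ge0; exact: HK1f.1.1.
have F0f : fclass F0 F0 by split => //; apply: le_lt_trans (dH_self _) _.
have SF0 : S_M M F0 < +oo.
  apply: lte_sum_pinfty => i _; rewrite /dH maxC; exact: (HM i).2.
have SK1 : S_M M K1 < +oo by apply: le_lt_trans (HK1m _ F0f) SF0.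
have S1K : S_M M K1 <= S_M M K by apply: HK1m.
have Hd' : dvec M K = d.
  apply/funext => j; apply/eqP; rewrite eq_le le_i /=.
  move: S1K; rewrite /S_M (bigD1 j) //= (bigD1 j (F:=fun i => dH K (M i))) //=.
  set r1 := (\sum_(i | _) dH K1 (M i))%R; set r2 := (\sum_(i | _) dH K (M i))%R.
  have r21 : r2 <= r1 by apply: lee_sum => i _; rewrite Hd1; exact: le_i.
  have r1g : 0 <= r1 by apply: sume_ge0 => i _; rewrite Hd1.
  have r1f : r1 \is a fin_num.
    rewrite ge0_fin_numE //; apply: le_lt_trans SK1.
    rewrite /S_M (bigD1 j) //= -/r1 leeDr // Hd1 //.
  move=> H; have : dH K1 (M j) + r1 <= dH K (M j) + r1 by apply: le_trans H (leeD2l _ r21).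
  by rewrite leeD2rE // Hd1.
split=> //; split => //.
move=> Y HY; apply: le_trans (HK1m Y HY).
by rewrite /S_M; apply: lee_sum => i _; rewrite Hd1; exact: (le_i i).
Qed.
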